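(* Let $k>0$ and fix $\Delta\in\mathbb{N}$. For every integer $n$ with $-\Delta<n<0$ there exists $\gamma_c=\gamma_c(k)\in\mathbb{R}$ such that $\Omega_{n,\gamma_c}=\Omega_{n+\Delta,\gamma_c}$ (the eigenvalues $i\Omega_{n,\gamma}$ and $i\Omega_{n+\Delta,\gamma}$ of $\mathcal H_0(\gamma)$ collide). All such collisions take place away from the origin (i.e. the common value is nonzero), except when $\Delta$ is even and $n=-\Delta/2$, in which case $n+\Delta=-n$ and the eigenvalues $i\Omega_{n,\gamma}$ and $i\Omega_{-n,\gamma}$ collide at the origin.
   Context: For $k>0$, $\gamma\in\mathbb{R}$ and $n\in\mathbb{Z}\setminus\{0\}$, set $\Omega_{n,\gamma}=k^3n(1-n^2)+\frac{3\gamma^2}{kn}$. These are such that $\mathcal H_0(\gamma)e^{inz}=i\Omega_{n,\gamma}e^{inz}$, where $\mathcal H_0(\gamma)=k^3\partial_z+k^3\partial_z^3-\frac{3\gamma^2}{k}\partial_z^{-1}$ on mean-zero $2\pi$-periodic functions (the zero-amplitude case of the linearized Konopelchenko–Dubrovsky operator), so its spectrum is $\{i\Omega_{n,\gamma}:n\in\mathbb{Z}\setminus\{0\}\}$. Two eigenvalues ''collide'' at $\gamma_c$ if $\Omega_{n,\gamma_c}=\Omega_{m,\gamma_c}$ for $n\ne m$. *)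

(* Defs.v *)
From Stdlib Require Export Reals ZArith Arith.
Open Scope R_scope.

Definition Omega (k : R) (n : Z) (g : R) : R :=
  k ^ 3 * IZR n * (1 - IZR n ^ 2) + 3 * g ^ 2 / (k * IZR n).

(* Main.v *)
Require Import Defs.
From Stdlib Require Import Reals ZArith Arith Lra Lia Psatz.
Open Scope R_scope.

Lemma Omega_mul k n g : k <> 0 -> IZR n <> 0 ->
  Omega k n g * (k * IZR n) = k^4 * IZR n ^ 2 * (1 - IZR n ^ 2) + 3 * g ^ 2.
Proof. intros. unfold Omega. field. auto. Qed.

Lemma int_part (Delta : nat) (n : Z) : (- Z.of_nat Delta < n < 0)%Z ->
  ((n + (n + Z.of_nat Delta)) = 0)%Z <-> (Nat.Even Delta /\ n = (- Z.of_nat (Delta / 2))%Z).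
Proof.
  intros H; split.
  - intros E. assert (Hd : Delta = (2 * Z.to_nat (- n))%nat) by lia.
    split. exists (Z.to_nat (-n)); exact Hd.
    rewrite Hd. rewrite Nat.mul_comm, Nat.div_mul by lia. lia.
  - intros [[p Hp] E]. subst Delta. rewrite Nat.mul_comm, Nat.div_mul in E by lia. lia.
Qed.

Theorem lemma3p1 (k : R) (Delta : nat) (hk : 0 < k) :
  forall n : Z, (- Z.of_nat Delta < n < 0)%Z ->
    (exists gc : R, Omega k n gc = Omega k (n + Z.of_nat Delta) gc) /\
    (forall gc : R, Omega k n gc = Omega k (n + Z.of_nat Delta) gc ->
       (Omega k n gc = 0 <->
          (Nat.Even Delta /\ n = (- Z.of_nat (Delta / 2))%Z))).
Proof.
  intros n Hn.
  assert (hN : IZR n <= -1) by (apply IZR_le; lia).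
  assert (hM : 1 <= IZR (n + Z.of_nat Delta)) by (apply IZR_le; lia).
  set (N := IZR n) in *. set (M := IZR (n + Z.of_nat Delta)) in *.
  assert (hk0 : k <> 0) by lra.
  assert (hN0 : N <> 0) by lra.
  assert (hM0 : M <> 0) by lra.
  assert (hNM : 1 <= - N * M) by nra.
  assert (hQ : 0 <= N^2 + N*M + M^2 - 1) by nra.
  assert (hk4 : 0 < k^4) by (apply pow_lt; lra).
  split.
  - set (c := k^4 * M * N * (1 - N^2 - N*M - M^2) / 3).
    assert (hc : 0 <= c).
    { unfold c. assert (0 <= (- N * M) * (N^2 + N*M + M^2 - 1)) by nra.
      assert (0 <= k^4 * ((- N * M) * (N^2 + N*M + M^2 - 1))) by nra. lra. }
    exists (sqrt c). unfold Omega. fold N M.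
    assert (Hs : sqrt c ^ 2 = c) by (simpl; rewrite Rmult_1_r; apply sqrt_sqrt; exact hc).
    rewrite Hs. unfold c. field. auto.
  - intros g E.
    pose proof (Omega_mul k n g hk0 hN0) as PN.
    pose proof (Omega_mul k (n + Z.of_nat Delta) g hk0 hM0) as PM.
    fold N in PN. fold M in PM.
    assert (E2 : (k^4 * N ^ 2 * (1 - N ^ 2) + 3 * g ^ 2) * M
               = (k^4 * M ^ 2 * (1 - M ^ 2) + 3 * g ^ 2) * N).
    { rewrite <- PN, <- PM, <- E. ring. }
    assert (E3 : (N - M) * (3 * g^2 - k^4 * N * M * (1 - N^2 - N*M - M^2)) = 0).
    { replace ((N - M) * (3 * g^2 - k^4 * N * M * (1 - N^2 - N*M - M^2))) with
        (- ((k^4 * N ^ 2 * (1 - N ^ 2) + 3 * g ^ 2) * M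
            - (k^4 * M ^ 2 * (1 - M ^ 2) + 3 * g ^ 2) * N)) by ring.
      rewrite E2. ring. }
    assert (G : 3 * g^2 = k^4 * N * M * (1 - N^2 - N*M - M^2)).
    { apply Rmult_integral in E3. destruct E3 as [E3|E3]; lra. }
    rewrite <- int_part by exact Hn.
    split.
    + intros Z0. rewrite Z0, Rmult_0_l, G in PN.
      assert (F : (k^4 * N) * ((N + M) * (1 - N^2 - M^2)) = 0) by (rewrite PN; ring).
      assert (k^4 * N <> 0) by (apply Rmult_integral_contrapositive; split; lra).
      apply Rmult_integral in F. destruct F as [F|F]; [contradiction|].
      apply Rmult_integral in F. destruct F as [F|F]; [|nra].
      apply eq_IZR. rewrite plus_IZR. fold N M. lra.
    + intros Z0. assert (F : N + M = 0).
      { unfold N, M. rewrite <- plus_IZR, Z0. reflexivity. }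
      assert (Omega k n g * (k * N) = 0).
      { rewrite PN, G. replace M with (-N) by lra. ring. }
      apply Rmult_integral in H. destruct H as [H|H]; [exact H|].
      exfalso. apply Rmult_integral in H; destruct H; contradiction.
Qed.
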